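(* Let $\Gamma$ be an environment as in the context and let $c_1,c_2,c_1',c_2'$ be finite sets of constraints with $(c_1,c_2)\longrightarrow_\Gamma^* (c_1',c_2')$. Then: (i) for every $x\in\mathrm{dom}(\phi_\ell(c_1'\cup c_2'))$ there exists a recipe $R$ with $\mathrm{vars}(R)\subseteq \mathrm{dom}(\phi^\Gamma_{\mathtt{LL}}\cup\phi_\ell(c_1\cup c_2))$ such that $\phi_\ell(c_1'\cup c_2')(x) = (R(\phi^\Gamma_{\mathtt{LL}}\cup\phi_\ell(c_1\cup c_2)))\downarrow$ and $\phi_r(c_1'\cup c_2')(x) = (R(\phi^\Gamma_{\mathtt{LL}}\cup\phi_r(c_1\cup c_2)))\downarrow$; (ii) conversely, for every $x\in\mathrm{dom}(\phi_\ell(c_1\cup c_2))$ there exists a recipe $R$ in which none of the symbols $\mathtt{dec},\mathtt{adec},\mathtt{checksign},\pi_1,\pi_2$ occurs, with $\mathrm{vars}(R)\subseteq \mathrm{dom}(\phi^\Gamma_{\mathtt{LL}}\cup\phi_\ell(c_1'\cup c_2'))$, such that $\phi_\ell(c_1\cup c_2)(x) = R(\phi^\Gamma_{\mathtt{LL}}\cup\phi_\ell(c_1'\cup c_2'))$ and $\phi_r(c_1\cup c_2)(x) = R(\phi^\Gamma_{\mathtt{LL}}\cup\phi_r(c_1'\cup c_2'))$.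
   Context: Fix disjoint infinite sets: names $\mathcal{N}=\mathcal{FN}\uplus\mathcal{BN}$ (free names, usable by the attacker, and bound names), keys $\mathcal{K}$, constants $\mathcal{C}$, variables $\mathcal{V}=\mathcal{X}\uplus\mathcal{AX}$. Constructors are $\mathtt{pk},\mathtt{vk},\mathtt{h}$ (unary) and $\mathtt{enc},\mathtt{aenc},\mathtt{sign},\langle\cdot,\cdot\rangle$ (binary); destructors are $\pi_1,\pi_2$ (unary) and $\mathtt{dec},\mathtt{adec},\mathtt{checksign}$ (binary). Terms are built from these symbols over $\mathcal{N}\cup\mathcal{K}\cup\mathcal{C}\cup\mathcal{V}$. A message is a term using only constructors, constants, names, keys and variables, such that every subterm $\mathtt{pk}(t'),\mathtt{vk}(t'),\mathtt{enc}(t_1,t'),\mathtt{sign}(t_1,t')$ has $t'\in\mathcal{K}$ and every subterm $\mathtt{aenc}(t_1,t_2)$ has $t_2=\mathtt{pk}(k)$ with $k\in\mathcal{K}$. The evaluation $t\downarrow$ (a term or the failure value $\bot$) is: $u\downarrow=u$ for $u\in\mathcal{N}\cup\mathcal{V}\cup\mathcal{K}\cup\mathcal{C}$; $\mathtt{pk}(t)\downarrow=\mathtt{pk}(t\downarrow)$ and $\mathtt{vk}(t)\downarrow=\mathtt{vk}(t\downarrow)$ if $t\downarrow\in\mathcal{K}$; $\mathtt{h}(t)\downarrow=\mathtt{h}(t\downarrow)$ if $t\downarrow\neq\bot$; $\langle t_1,t_2\rangle\downarrow=\langle t_1\downarrow,t_2\downarrow\rangle$ if both are $\neq\bot$; $\mathtt{enc}(t_1,t_2)\downarrow=\mathtt{enc}(t_1\downarrow,t_2\downarrow)$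 and $\mathtt{sign}(t_1,t_2)\downarrow=\mathtt{sign}(t_1\downarrow,t_2\downarrow)$ if $t_1\downarrow\neq\bot$ and $t_2\downarrow\in\mathcal{K}$; $\mathtt{aenc}(t_1,t_2)\downarrow=\mathtt{aenc}(t_1\downarrow,t_2\downarrow)$ if $t_1\downarrow\neq\bot$ and $t_2\downarrow=\mathtt{pk}(k)$ for some $k\in\mathcal{K}$; $\pi_1(t)\downarrow=t_1$ and $\pi_2(t)\downarrow=t_2$ if $t\downarrow=\langle t_1,t_2\rangle$; $\mathtt{dec}(t_1,t_2)\downarrow=t_3$ if $t_1\downarrow=\mathtt{enc}(t_3,t_4)$ and $t_4=t_2\downarrow$; $\mathtt{adec}(t_1,t_2)\downarrow=t_3$ if $t_1\downarrow=\mathtt{aenc}(t_3,\mathtt{pk}(t_4))$ and $t_4=t_2\downarrow$; $\mathtt{checksign}(t_1,t_2)\downarrow=t_3$ if $t_1\downarrow=\mathtt{sign}(t_3,t_4)$ and $t_2\downarrow=\mathtt{vk}(t_4)$; and $t\downarrow=\bot$ in all other cases. A recipe is a term built from constructors, destructors, constants and names in $\mathcal{FN}$ over variables in $\mathcal{AX}$. A frame is a substitution $\phi$ with $\mathrm{dom}(\phi)\subseteq\mathcal{AX}$; $R(\phi)$ denotes the application of $\phi$ to $R$. The environment $\Gamma$ assigns to finitely many keys $k$ a key type $\mathrm{key}^{l}(T)$ and to finitely many nonces $n$ a nonce type $\tau^{l,a}_n$, with labels $l\in\{\mathtt{LL},\mathtt{HL},\mathtt{HH}\}$ and $a\in\{1,\infty\}$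 (only the labels matter here). $\phi^\Gamma_{\mathtt{LL}}$ is a frame (on fresh variables) whose range consists exactly of: every key $k$ with $\Gamma(k)=\mathrm{key}^{\mathtt{LL}}(T)$ for some $T$; $\mathtt{pk}(k)$ and $\mathtt{vk}(k)$ for every key $k\in\mathrm{dom}(\Gamma)$; every nonce $n$ with $\Gamma(n)=\tau^{\mathtt{LL},a}_n$ for some $a$. A constraint is a pair of messages written $u\sim v$. For a finite set $c$ of constraints, $\phi_\ell(c)$ and $\phi_r(c)$ are frames with a common domain, a set of variables of $\mathcal{AX}$ disjoint from $\mathrm{dom}(\phi^\Gamma_{\mathtt{LL}})$ and in bijection with $c$, such that the variable associated with $u\sim v$ is mapped to $u$ by $\phi_\ell(c)$ and to $v$ by $\phi_r(c)$. The relation $\longrightarrow_\Gamma$ on pairs of sets of constraints is defined by (for all $c,c',M,N,M',N'$): $(\{\langle M,N\rangle\sim\langle M',N'\rangle\}\cup c,c')\longrightarrow_\Gamma(\{M\sim M',N\sim N'\}\cup c,c')$; if $\Gamma(k)=\mathrm{key}^{\mathtt{LL}}(T)$ for some $T$: $(\{\mathtt{enc}(M,k)\sim\mathtt{enc}(M',k)\}\cup c,c')\longrightarrow_\Gamma(\{M\sim M'\}\cup c,c')$, $(\{\mathtt{aenc}(M,\mathtt{pk}(k))\sim\mathtt{aenc}(M',\mathtt{pk}(k))\}\cup c,c')\longrightarrow_\Gamma(\{M\sim M'\}\cup c,c')$ and $(\{\mathtt{sign}(M,k)\sim\mathtt{sign}(M',k)\}\cup c,c')\longrightarrow_\Gamma(\{M\sim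 M'\}\cup c,c')$; if $\Gamma(k)=\mathrm{key}^{\mathtt{HH}}(T)$ for some $T$: $(\{\mathtt{sign}(M,k)\sim\mathtt{sign}(M',k)\}\cup c,c')\longrightarrow_\Gamma(\{M\sim M'\}\cup c,\{\mathtt{sign}(M,k)\sim\mathtt{sign}(M',k)\}\cup c')$. $\longrightarrow_\Gamma^*$ is its reflexive transitive closure. *)

(* Defs.v *)
From Stdlib Require Import List Bool Arith Relations.
Import ListNotations.
Set Implicit Arguments.

Inductive name := FN (n : nat) | BN (n : nat).
Inductive atom := AName (n : name) | AKey (k : nat) | AConst (c : nat).
Inductive var := XV (n : nat) | AXV (n : nat).

Inductive term (V : Type) :=
| TAtom (a : atom)
| TVar (v : V)
| TPk (t : term V) | TVk (t : term V) | THash (t : term V)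
| TEnc (t1 t2 : term V) | TAenc (t1 t2 : term V) | TSign (t1 t2 : term V)
| TPair (t1 t2 : term V)
| TPi1 (t : term V) | TPi2 (t : term V)
| TDec (t1 t2 : term V) | TAdec (t1 t2 : term V) | TChecksign (t1 t2 : term V).
Arguments TAtom {V}. Arguments TVar {V}. Arguments TPk {V}. Arguments TVk {V}.
Arguments THash {V}. Arguments TEnc {V}. Arguments TAenc {V}. Arguments TSign {V}.
Arguments TPair {V}. Arguments TPi1 {V}. Arguments TPi2 {V}. Arguments TDec {V}.
Arguments TAdec {V}. Arguments TChecksign {V}.

Definition name_eq_dec (x y : name) : {x = y} + {x <> y}.
Proof. decide equality; apply Nat.eq_dec. Defined.
Definition atom_eq_dec (x y : atom) : {x = y} + {x <> y}.
Proof. decide equality; try apply Nat.eq_dec; apply name_eq_dec. Defined.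
Definition var_eq_dec (x y : var) : {x = y} + {x <> y}.
Proof. decide equality; apply Nat.eq_dec. Defined.
Definition term_eq_dec (V : Type) (HV : forall x y : V, {x = y} + {x <> y})
  (x y : term V) : {x = y} + {x <> y}.
Proof. decide equality; first [apply atom_eq_dec | apply HV]. Defined.

Definition msg := term var.
Definition msg_eq_dec : forall x y : msg, {x = y} + {x <> y} := term_eq_dec var_eq_dec.

Definition key (k : nat) : msg := TAtom (AKey k).
Definition is_key (t : msg) : Prop := exists k, t = key k.

Fixpoint is_message (t : msg) : Prop :=
  match t with
  | TAtom _ | TVar _ => True
  | TPk t' | TVk t' => is_key t'
  | THash t' => is_message t'
  | TEnc t1 t2 | TSign t1 t2 => is_message t1 /\ is_key t2
  | TAenc t1 t2 => is_message t1 /\ exists k, t2 = TPk (key k)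
  | TPair t1 t2 => is_message t1 /\ is_message t2
  | _ => False
  end.

(* ---------- Evaluation t↓ (None stands for ⊥) ---------- *)
Fixpoint eval (t : msg) : option msg :=
  match t with
  | TAtom a => Some (TAtom a)
  | TVar x => Some (TVar x)
  | TPk t' => match eval t' with Some (TAtom (AKey k)) => Some (TPk (key k)) | _ => None end
  | TVk t' => match eval t' with Some (TAtom (AKey k)) => Some (TVk (key k)) | _ => None end
  | THash t' => match eval t' with Some u => Some (THash u) | None => None end
  | TPair t1 t2 =>
      match eval t1, eval t2 with Some u1, Some u2 => Some (TPair u1 u2) | _, _ => None end
  | TEnc t1 t2 =>
      match eval t1, eval t2 with
      | Some u1, Some (TAtom (AKey k)) => Some (TEnc u1 (key k)) | _, _ => None end
  | TSign t1 t2 =>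
      match eval t1, eval t2 with
      | Some u1, Some (TAtom (AKey k)) => Some (TSign u1 (key k)) | _, _ => None end
  | TAenc t1 t2 =>
      match eval t1, eval t2 with
      | Some u1, Some (TPk (TAtom (AKey k))) => Some (TAenc u1 (TPk (key k)))
      | _, _ => None end
  | TPi1 t' => match eval t' with Some (TPair u1 _) => Some u1 | _ => None end
  | TPi2 t' => match eval t' with Some (TPair _ u2) => Some u2 | _ => None end
  | TDec t1 t2 =>
      match eval t1, eval t2 with
      | Some (TEnc t3 t4), Some u => if msg_eq_dec t4 u then Some t3 else None
      | _, _ => None end
  | TAdec t1 t2 =>
      match eval t1, eval t2 with
      | Some (TAenc t3 (TPk t4)), Some u => if msg_eq_dec t4 u then Some t3 else None
      | _, _ => None end
  | TChecksign t1 t2 =>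
      match eval t1, eval t2 with
      | Some (TSign t3 t4), Some (TVk u) => if msg_eq_dec t4 u then Some t3 else None
      | _, _ => None end
  end.

(* ---------- Environment (only labels matter) ---------- *)
Inductive label := LL | HL | HH.
Definition label_eq_dec (x y : label) : {x = y} + {x <> y}.
Proof. decide equality. Defined.

Record env := mkEnv {
  gkey : nat -> option label;     (* Γ(k) = key^l(T)  ↦  Some l *)
  gnonce : name -> option label   (* Γ(n) = τ^{l,a}_n  ↦  Some l *)
}.

Definition env_finite (G : env) : Prop :=
  exists (lk : list nat) (ln : list name),
    (forall k, gkey G k <> None -> In k lk) /\ (forall n, gnonce G n <> None -> In n ln).

Definition constraint := (msg * msg)%type.
Definition constraint_eq_dec (x y : constraint) : {x = y} + {x <> y}.
Proof. decide equality; apply msg_eq_dec. Defined.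
Definition is_constraint (p : constraint) : Prop := is_message (fst p) /\ is_message (snd p).

(* Recipe (AX) variables: RLL t is the variable of phi^Γ_LL whose value is t;
   RC u v is the variable associated with the constraint u ~ v. *)
Inductive rvar := RLL (t : msg) | RC (u v : msg).
Definition recipe := term rvar.

Fixpoint is_recipe (R : recipe) : Prop :=
  match R with
  | TAtom (AName (FN _)) | TAtom (AConst _) => True
  | TAtom _ => False
  | TVar _ => True
  | TPk t | TVk t | THash t | TPi1 t | TPi2 t => is_recipe t
  | TEnc t1 t2 | TAenc t1 t2 | TSign t1 t2 | TPair t1 t2
  | TDec t1 t2 | TAdec t1 t2 | TChecksign t1 t2 => is_recipe t1 /\ is_recipe t2
  end.

Fixpoint no_destructor (R : recipe) : Prop :=
  match R with
  | TAtom _ | TVar _ => True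
  | TPk t | TVk t | THash t => no_destructor t
  | TEnc t1 t2 | TAenc t1 t2 | TSign t1 t2 | TPair t1 t2 => no_destructor t1 /\ no_destructor t2
  | _ => False
  end.

Fixpoint rvars_in (P : rvar -> Prop) (R : recipe) : Prop :=
  match R with
  | TAtom _ => True
  | TVar x => P x
  | TPk t | TVk t | THash t | TPi1 t | TPi2 t => rvars_in P t
  | TEnc t1 t2 | TAenc t1 t2 | TSign t1 t2 | TPair t1 t2
  | TDec t1 t2 | TAdec t1 t2 | TChecksign t1 t2 => rvars_in P t1 /\ rvars_in P t2
  end.

Definition frame := rvar -> option msg.
Definition in_dom (phi : frame) (x : rvar) : Prop := phi x <> None.
Definition funion (phi1 phi2 : frame) : frame :=
  fun x => match phi1 x with Some t => Some t | None => phi2 x end.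

Fixpoint apply_frame (phi : frame) (R : recipe) : option msg :=
  let un f t := match apply_frame phi t with Some u => Some (f u) | None => None end in
  let bin f t1 t2 := match apply_frame phi t1, apply_frame phi t2 with
                     | Some u1, Some u2 => Some (f u1 u2) | _, _ => None end in
  match R with
  | TAtom a => Some (TAtom a)
  | TVar x => phi x
  | TPk t => un TPk t | TVk t => un TVk t | THash t => un THash t
  | TPi1 t => un TPi1 t | TPi2 t => un TPi2 t
  | TEnc t1 t2 => bin TEnc t1 t2 | TAenc t1 t2 => bin TAenc t1 t2
  | TSign t1 t2 => bin TSign t1 t2 | TPair t1 t2 => bin TPair t1 t2
  | TDec t1 t2 => bin TDec t1 t2 | TAdec t1 t2 => bin TAdec t1 t2
  | TChecksign t1 t2 => bin TChecksign t1 t2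
  end.

Definition eval_frame (phi : frame) (R : recipe) : option msg :=
  match apply_frame phi R with Some t => eval t | None => None end.

Definition inLL (G : env) (t : msg) : bool :=
  match t with
  | TAtom (AKey k) => match gkey G k with Some LL => true | _ => false end
  | TAtom (AName n) => match gnonce G n with Some LL => true | _ => false end
  | TPk (TAtom (AKey k)) | TVk (TAtom (AKey k)) =>
      match gkey G k with Some _ => true | None => false end
  | _ => false
  end.

Definition phiLL (G : env) : frame :=
  fun x => match x with RLL t => if inLL G t then Some t else None | RC _ _ => None end.

Definition phi_l (c : list constraint) : frame :=
  fun x => match x with
           | RC u v => if in_dec constraint_eq_dec (u, v) c then Some u else None
           | RLL _ => None end.
Definition phi_r (c : list constraint) : frame :=
  fun x => match x with
           | RC u v => if in_dec constraint_eq_dec (u, v) c then Some v else None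
           | RLL _ => None end.

(* Finite sets are represented by lists, compared up to set equality. *)
Definition cstate := (list constraint * list constraint)%type.

Inductive step (G : env) : cstate -> cstate -> Prop :=
| step_pair M N M' N' c c' :
    step G ((TPair M N, TPair M' N') :: c, c') ((M, M') :: (N, N') :: c, c')
| step_enc k M M' c c' : gkey G k = Some LL ->
    step G ((TEnc M (key k), TEnc M' (key k)) :: c, c') ((M, M') :: c, c')
| step_aenc k M M' c c' : gkey G k = Some LL ->
    step G ((TAenc M (TPk (key k)), TAenc M' (TPk (key k))) :: c, c') ((M, M') :: c, c')
| step_sign_LL k M M' c c' : gkey G k = Some LL ->
    step G ((TSign M (key k), TSign M' (key k)) :: c, c') ((M, M') :: c, c')
| step_sign_HH k M M' c c' : gkey G k = Some HH ->
    step G ((TSign M (key k), TSign M' (key k)) :: c, c')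
           ((M, M') :: c, (TSign M (key k), TSign M' (key k)) :: c').

Definition seteq (l1 l2 : list constraint) : Prop := forall p, In p l1 <-> In p l2.
Definition seteq2 (s1 s2 : cstate) : Prop := seteq (fst s1) (fst s2) /\ seteq (snd s1) (snd s2).

Definition step_set (G : env) (s1 s2 : cstate) : Prop :=
  exists s1' s2', seteq2 s1 s1' /\ seteq2 s2 s2' /\ step G s1' s2'.

Definition steps (G : env) : cstate -> cstate -> Prop :=
  clos_refl_trans cstate (fun s1 s2 => seteq2 s1 s2 \/ step_set G s1 s2).

(* Main.v *)
Require Import Defs.
From Stdlib Require Import List.
Import ListNotations.

Fixpoint ev (f : rvar -> option msg) (t : recipe) : option msg :=
  match t with
  | TAtom a => Some (TAtom a)
  | TVar x => f x
  | TPk t' => match ev f t' with Some (TAtom (AKey k)) => Some (TPk (key k)) | _ => None end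
  | TVk t' => match ev f t' with Some (TAtom (AKey k)) => Some (TVk (key k)) | _ => None end
  | THash t' => match ev f t' with Some u => Some (THash u) | None => None end
  | TPair t1 t2 =>
      match ev f t1, ev f t2 with Some u1, Some u2 => Some (TPair u1 u2) | _, _ => None end
  | TEnc t1 t2 =>
      match ev f t1, ev f t2 with
      | Some u1, Some (TAtom (AKey k)) => Some (TEnc u1 (key k)) | _, _ => None end
  | TSign t1 t2 =>
      match ev f t1, ev f t2 with
      | Some u1, Some (TAtom (AKey k)) => Some (TSign u1 (key k)) | _, _ => None end
  | TAenc t1 t2 =>
      match ev f t1, ev f t2 with
      | Some u1, Some (TPk (TAtom (AKey k))) => Some (TAenc u1 (TPk (key k)))
      | _, _ => None end
  | TPi1 t' => match ev f t' with Some (TPair u1 _) => Some u1 | _ => None end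
  | TPi2 t' => match ev f t' with Some (TPair _ u2) => Some u2 | _ => None end
  | TDec t1 t2 =>
      match ev f t1, ev f t2 with
      | Some (TEnc t3 t4), Some u => if msg_eq_dec t4 u then Some t3 else None
      | _, _ => None end
  | TAdec t1 t2 =>
      match ev f t1, ev f t2 with
      | Some (TAenc t3 (TPk t4)), Some u => if msg_eq_dec t4 u then Some t3 else None
      | _, _ => None end
  | TChecksign t1 t2 =>
      match ev f t1, ev f t2 with
      | Some (TSign t3 t4), Some (TVk u) => if msg_eq_dec t4 u then Some t3 else None
      | _, _ => None end
  end.

Ltac crush := repeat (match goal with | |- context [match ?e with _ => _ end] => destruct e end); try reflexivity; try congruence.

Lemma ef_ev_gen phi R : eval_frame phi R =
  ev (fun x => match phi x with Some t => eval t | None => None end) R.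
Proof.
  unfold eval_frame.
  induction R; simpl;
  repeat match goal with
  | IH : match apply_frame phi ?R with _ => _ end = _ |- _ =>
      let E := fresh in destruct (apply_frame phi R) eqn:E; rewrite <- IH; clear IH
  end; simpl; crush.
Qed.

Lemma eval_msg t : is_message t -> eval t = Some t.
Proof.
  induction t; simpl; intros H; try tauto.
  - destruct H as [k ->]; reflexivity.
  - destruct H as [k ->]; reflexivity.
  - rewrite IHt; auto.
  - destruct H as [H1 [k ->]]; rewrite IHt1; auto.
  - destruct H as [H1 [k ->]]; rewrite IHt1; auto.
  - destruct H as [H1 [k ->]]; rewrite IHt1; auto.
  - destruct H as [H1 H2]; rewrite IHt1, IHt2; auto.
Qed.

Lemma ev_ext f g R : (forall x, f x = g x) -> ev f R = ev g R.
Proof. intro H; induction R; simpl; rewrite ?IHR, ?IHR1, ?IHR2; auto. Qed.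

Lemma ef_ev phi R : (forall x t, phi x = Some t -> eval t = Some t) ->
  eval_frame phi R = ev phi R.
Proof.
  intro H; rewrite ef_ev_gen; apply ev_ext; intro x.
  destruct (phi x) eqn:E; auto; eapply H; eauto.
Qed.
Section S.
Variable G : env.
Definition F c := funion (phiLL G) (phi_l c).
Definition Fr c := funion (phiLL G) (phi_r c).

Definition P1 cs ds := forall x, in_dom (F ds) x -> exists R, is_recipe R /\
  rvars_in (in_dom (F cs)) R /\ F ds x = ev (F cs) R /\ Fr ds x = ev (Fr cs) R.
Definition P2 cs ds := forall x, in_dom (F cs) x -> exists R, is_recipe R /\
  no_destructor R /\ rvars_in (in_dom (F ds)) R /\
  F cs x = apply_frame (F ds) R /\ Fr cs x = apply_frame (Fr ds) R.

Lemma comp1 (A A' B B' : frame) :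
  (forall x, in_dom B x -> exists R, is_recipe R /\ rvars_in (in_dom A) R /\
     B x = ev A R /\ B' x = ev A' R) ->
  forall R, is_recipe R -> rvars_in (in_dom B) R -> exists R', is_recipe R' /\
     rvars_in (in_dom A) R' /\ ev B R = ev A R' /\ ev B' R = ev A' R'.
Proof.
  intros H R; induction R; simpl; intros HR HV.
  1: (exists (TAtom a); simpl; repeat split; auto).
  1: destruct (H v HV) as [R [? [? [? ?]]]]; exists R; tauto.
  all: try (destruct (IHR HR HV) as [R' [? [? [E1 E2]]]];
    first [solve [exists (TPk R'); simpl; rewrite E1, E2; repeat split; auto] | solve [exists (TVk R'); simpl; rewrite E1, E2; repeat split; auto] | solve [exists (THash R'); simpl; rewrite E1, E2; repeat split; auto] | solve [exists (TPi1 R'); simpl; rewrite E1, E2; repeat split; auto] | solve [exists (TPi2 R'); simpl; rewrite E1, E2; repeat split; auto]]).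
  all: destruct HR as [HR1 HR2]; destruct HV as [HV1 HV2];
    destruct (IHR1 HR1 HV1) as [Q1 [? [? [E1 E2]]]];
    destruct (IHR2 HR2 HV2) as [Q2 [? [? [E3 E4]]]];
    first [solve [exists (TEnc Q1 Q2); simpl; rewrite E1, E2, E3, E4; repeat split; auto] | solve [exists (TAenc Q1 Q2); simpl; rewrite E1, E2, E3, E4; repeat split; auto] | solve [exists (TSign Q1 Q2); simpl; rewrite E1, E2, E3, E4; repeat split; auto] | solve [exists (TPair Q1 Q2); simpl; rewrite E1, E2, E3, E4; repeat split; auto] | solve [exists (TDec Q1 Q2); simpl; rewrite E1, E2, E3, E4; repeat split; auto] | solve [exists (TAdec Q1 Q2); simpl; rewrite E1, E2, E3, E4; repeat split; auto] | solve [exists (TChecksign Q1 Q2); simpl; rewrite E1, E2, E3, E4; repeat split; auto]].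
Qed.

Lemma comp2 (A A' B B' : frame) :
  (forall x, in_dom B x -> exists R, is_recipe R /\ no_destructor R /\ rvars_in (in_dom A) R /\
     B x = apply_frame A R /\ B' x = apply_frame A' R) ->
  forall R, is_recipe R -> no_destructor R -> rvars_in (in_dom B) R -> exists R', is_recipe R' /\
     no_destructor R' /\ rvars_in (in_dom A) R' /\ apply_frame B R = apply_frame A R' /\
     apply_frame B' R = apply_frame A' R'.
Proof.
  intros H R; induction R; simpl; intros HR HN HV; try tauto.
  1: (exists (TAtom a); simpl; repeat split; auto).
  1: destruct (H v HV) as [R [? [? [? [? ?]]]]]; exists R; tauto.
  all: try (destruct (IHR HR HN HV) as [R' [? [? [? [E1 E2]]]]];
    first [solve [exists (TPk R'); simpl; rewrite E1, E2; repeat split; auto] | solve [exists (TVk R'); simpl; rewrite E1, E2; repeat split; auto] | solve [exists (THash R'); simpl; rewrite E1, E2; repeat split; auto]]).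
  all: destruct HR as [HR1 HR2]; destruct HV as [HV1 HV2]; destruct HN as [HN1 HN2];
    destruct (IHR1 HR1 HN1 HV1) as [Q1 [? [? [? [E1 E2]]]]];
    destruct (IHR2 HR2 HN2 HV2) as [Q2 [? [? [? [E3 E4]]]]];
    first [solve [exists (TEnc Q1 Q2); simpl; rewrite E1, E2, E3, E4; repeat split; auto] | solve [exists (TAenc Q1 Q2); simpl; rewrite E1, E2, E3, E4; repeat split; auto] | solve [exists (TSign Q1 Q2); simpl; rewrite E1, E2, E3, E4; repeat split; auto] | solve [exists (TPair Q1 Q2); simpl; rewrite E1, E2, E3, E4; repeat split; auto]].
Qed.

Lemma dom_eq c x : in_dom (F c) x <-> in_dom (Fr c) x.
Proof.
  unfold in_dom, F, Fr, funion, phi_l, phi_r; destruct x; [tauto|]; simpl.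
  destruct (in_dec _ _ _); split; congruence.
Qed.

Lemma P1_trans a b c : P1 a b -> P1 b c -> P1 a c.
Proof.
  intros H1 H2 x Hx. destruct (H2 x Hx) as [R [? [? [E1 E2]]]].
  destruct (comp1 (F a) (Fr a) (F b) (Fr b) H1 R) as [R' [? [? [E3 E4]]]]; auto.
  exists R'; rewrite E1, E2, E3, E4; auto.
Qed.

Lemma P2_trans a b c : P2 a b -> P2 b c -> P2 a c.
Proof.
  intros H1 H2 x Hx. destruct (H1 x Hx) as [R [? [? [? [E1 E2]]]]].
  destruct (comp2 (F c) (Fr c) (F b) (Fr b) H2 R) as [R' [? [? [? [E3 E4]]]]]; auto.
  exists R'; rewrite E1, E2, E3, E4; auto.
Qed.

Lemma P_eq a b : (forall x, F a x = F b x) -> (forall x, Fr a x = Fr b x) -> P1 a b /\ P2 a b.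
Proof.
  intros H H'; split; intros x Hx; exists (TVar x); simpl; repeat split; auto;
  unfold in_dom in *; rewrite ?H, ?H' in *; auto.
Qed.

Lemma F_in c u v : In (u, v) c -> F c (RC u v) = Some u /\ Fr c (RC u v) = Some v.
Proof.
  intro H; unfold F, Fr, funion, phi_l, phi_r; simpl.
  destruct (in_dec _ _ _); tauto.
Qed.

Lemma P1_of cs ds : (forall u v, In (u, v) ds -> In (u, v) cs \/ exists R, is_recipe R /\
   rvars_in (in_dom (F cs)) R /\ ev (F cs) R = Some u /\ ev (Fr cs) R = Some v) -> P1 cs ds.
Proof.
  intros H x Hx. destruct x as [t | u v].
  - exists (TVar (RLL t)); simpl; repeat split; auto.
  - assert (Hin : In (u, v) ds).
    { unfold in_dom, F, funion, phi_l in Hx; simpl in Hx; destruct (in_dec _ _ _); tauto. }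
    destruct (F_in _ _ _ Hin) as [-> ->].
    destruct (H u v Hin) as [Hc | [R HR]].
    + exists (TVar (RC u v)); simpl; destruct (F_in _ _ _ Hc) as [E1 E2];
      unfold in_dom; rewrite E1, E2; repeat split; auto; congruence.
    + exists R; repeat match goal with HH: _ /\ _ |- _ => destruct HH end; repeat split; auto.
Qed.

Lemma P2_of cs ds : (forall u v, In (u, v) cs -> In (u, v) ds \/ exists R, is_recipe R /\
   no_destructor R /\
   rvars_in (in_dom (F ds)) R /\ apply_frame (F ds) R = Some u /\ apply_frame (Fr ds) R = Some v) -> P2 cs ds.
Proof.
  intros H x Hx. destruct x as [t | u v].
  - exists (TVar (RLL t)); simpl; repeat split; auto.
  - assert (Hin : In (u, v) cs).
    { unfold in_dom, F, funion, phi_l in Hx; simpl in Hx; destruct (in_dec _ _ _); tauto. }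
    destruct (F_in _ _ _ Hin) as [-> ->].
    destruct (H u v Hin) as [Hc | [R HR]].
    + exists (TVar (RC u v)); simpl; destruct (F_in _ _ _ Hc) as [E1 E2];
      unfold in_dom; rewrite E1, E2; repeat split; auto; congruence.
    + exists R; repeat match goal with HH: _ /\ _ |- _ => destruct HH end; repeat split; auto.
Qed.

Definition cat (s : cstate) := fst s ++ snd s.

Lemma seteq_F s t : seteq2 s t -> (forall x, F (cat s) x = F (cat t) x) /\ (forall x, Fr (cat s) x = Fr (cat t) x).
Proof.
  intros [H1 H2]; unfold cat, F, Fr, funion, phi_l, phi_r; split; intros [w | u v]; auto;
  destruct (in_dec _ _ (fst s ++ snd s)) as [i|i], (in_dec _ _ (fst t ++ snd t)) as [j|j]; auto;
  exfalso; rewrite in_app_iff in i, j; firstorder.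
Qed.

Lemma LLkey c k : gkey G k = Some LL -> F c (RLL (key k)) = Some (key k) /\ Fr c (RLL (key k)) = Some (key k).
Proof. intro H; unfold F, Fr, funion, phiLL, inLL, key; rewrite H; auto. Qed.
Lemma VKkey c k l : gkey G k = Some l -> F c (RLL (TVk (key k))) = Some (TVk (key k)) /\ Fr c (RLL (TVk (key k))) = Some (TVk (key k)).
Proof. intro H; unfold F, Fr, funion, phiLL, inLL, key; rewrite H; auto. Qed.
Lemma PKkey c k l : gkey G k = Some l -> F c (RLL (TPk (key k))) = Some (TPk (key k)) /\ Fr c (RLL (TPk (key k))) = Some (TPk (key k)).
Proof. intro H; unfold F, Fr, funion, phiLL, inLL, key; rewrite H; auto. Qed.

Ltac memb := simpl; rewrite ?in_app_iff; simpl; tauto.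
Ltac fin := cbn [ev apply_frame rvars_in is_recipe no_destructor]; unfold in_dom;
  repeat match goal with
  | |- context [F ?cs (RC ?u ?v)] =>
      let E := fresh in assert (E : F cs (RC u v) = Some u) by (apply F_in; memb); rewrite E; clear E
  | |- context [Fr ?cs (RC ?u ?v)] =>
      let E := fresh in assert (E : Fr cs (RC u v) = Some v) by (apply F_in; memb); rewrite E; clear E
  | |- context [F ?cs (RLL ?t)] =>
      let E := fresh in assert (E : F cs (RLL t) = Some t) by
        (unfold F, funion, phiLL, inLL, key; cbn; match goal with Hk : gkey _ _ = _ |- _ => rewrite Hk end; reflexivity);
      rewrite E; clear E
  | |- context [Fr ?cs (RLL ?t)] =>
      let E := fresh in assert (E : Fr cs (RLL t) = Some t) by
        (unfold Fr, funion, phiLL, inLL, key; cbn; match goal with Hk : gkey _ _ = _ |- _ => rewrite Hk end; reflexivity);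
      rewrite E; clear E
  end;
  cbv beta iota delta [key]; repeat split; try congruence; repeat destruct (msg_eq_dec _ _); first [reflexivity | congruence].

Ltac oldin := left; simpl; rewrite ?in_app_iff in *; simpl in *; rewrite ?in_app_iff in *; tauto.

Lemma step_P s1 s2 : step G s1 s2 -> P1 (cat s1) (cat s2) /\ P2 (cat s1) (cat s2).
Proof.
  intro H; destruct H; unfold cat; simpl fst; simpl snd; (split;
    [apply P1_of | apply P2_of]); intros u v Hin.
  - simpl in Hin; destruct Hin as [Heq | [Heq | Hin]]; [| | oldin];
      injection Heq as <- <-; right.
    + exists (TPi1 (TVar (RC (TPair M N) (TPair M' N')))).
      fin.
    + exists (TPi2 (TVar (RC (TPair M N) (TPair M' N')))).
      fin.
  - simpl in Hin; destruct Hin as [Heq | Hin]; [| oldin];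
      injection Heq as <- <-; right.
    exists (TPair (TVar (RC M M')) (TVar (RC N N'))).
    fin.
  - simpl in Hin; destruct Hin as [Heq | Hin]; [| oldin];
      injection Heq as <- <-; right.
    exists (TDec (TVar (RC (TEnc M (key k)) (TEnc M' (key k)))) (TVar (RLL (key k)))).
    fin.
  - simpl in Hin; destruct Hin as [Heq | Hin]; [| oldin];
      injection Heq as <- <-; right.
    exists (TEnc (TVar (RC M M')) (TVar (RLL (key k)))).
    fin.
  - simpl in Hin; destruct Hin as [Heq | Hin]; [| oldin];
      injection Heq as <- <-; right.
    exists (TAdec (TVar (RC (TAenc M (TPk (key k))) (TAenc M' (TPk (key k))))) (TVar (RLL (key k)))).
    fin.
  - simpl in Hin; destruct Hin as [Heq | Hin]; [| oldin];
      injection Heq as <- <-; right.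
    exists (TAenc (TVar (RC M M')) (TVar (RLL (TPk (key k))))).
    fin.
  - simpl in Hin; destruct Hin as [Heq | Hin]; [| oldin];
      injection Heq as <- <-; right.
    exists (TChecksign (TVar (RC (TSign M (key k)) (TSign M' (key k)))) (TVar (RLL (TVk (key k))))).
    fin.
  - simpl in Hin; destruct Hin as [Heq | Hin]; [| oldin];
      injection Heq as <- <-; right.
    exists (TSign (TVar (RC M M')) (TVar (RLL (key k)))).
    fin.
  - simpl in Hin; destruct Hin as [Heq | Hin]; [| oldin];
      injection Heq as <- <-; right.
    exists (TChecksign (TVar (RC (TSign M (key k)) (TSign M' (key k)))) (TVar (RLL (TVk (key k))))).
    fin.
  - oldin.
Qed.
End S.

Lemma main G s1 s2 : steps G s1 s2 -> P1 G (cat s1) (cat s2) /\ P2 G (cat s1) (cat s2).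
Proof.
  unfold steps; intro H; induction H as [x y [Hs | [s1' [s2' [Ha [Hb Hc]]]]] | x | x y z _ IH1 _ IH2].
  - destruct (seteq_F G _ _ Hs); apply P_eq; auto.
  - destruct (seteq_F G _ _ Ha) as [A1 A2]; destruct (seteq_F G _ _ Hb) as [B1 B2].
    destruct (P_eq G (cat x) (cat s1')) as [C1 C2]; auto.
    destruct (P_eq G (cat s2') (cat y)) as [D1 D2]; auto.
    destruct (step_P G _ _ Hc) as [E1 E2].
    split; eauto using P1_trans, P2_trans.
  - apply P_eq; auto.
  - destruct IH1, IH2; split; eauto using P1_trans, P2_trans.
Qed.

Lemma vals_msg G c : (forall p, In p c -> is_constraint p) ->
  (forall x t, funion (phiLL G) (phi_l c) x = Some t -> eval t = Some t) /\
  (forall x t, funion (phiLL G) (phi_r c) x = Some t -> eval t = Some t).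
Proof.
  intro H; split; intros [w | u v] t; unfold funion, phiLL, phi_l, phi_r; simpl.
  1,3: destruct (inLL G w) eqn:E; intro Ht; inversion Ht; subst;
       destruct t as [a| | t'| t'| | | | | | | | | |]; simpl in E; try discriminate;
       try (destruct a; discriminate || reflexivity);
       destruct t' as [a| | | | | | | | | | | | |]; try discriminate; destruct a; try discriminate; reflexivity.
  all: destruct (in_dec _ _ _) as [i|i]; intro Ht; inversion Ht; subst; apply eval_msg; apply H in i;
       destruct i; auto.
Qed.

Theorem lemmaB39 (G : env) (c1 c2 c1' c2' : list constraint) :
  env_finite G ->
  (forall p, In p c1 -> is_constraint p) ->
  (forall p, In p c2 -> is_constraint p) ->
  (forall p, In p c1' -> is_constraint p) ->
  (forall p, In p c2' -> is_constraint p) ->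
  steps G (c1, c2) (c1', c2') ->
  (forall x, in_dom (phi_l (c1' ++ c2')) x ->
     exists R : recipe,
       is_recipe R /\
       rvars_in (in_dom (funion (phiLL G) (phi_l (c1 ++ c2)))) R /\
       phi_l (c1' ++ c2') x = eval_frame (funion (phiLL G) (phi_l (c1 ++ c2))) R /\
       phi_r (c1' ++ c2') x = eval_frame (funion (phiLL G) (phi_r (c1 ++ c2))) R) /\
  (forall x, in_dom (phi_l (c1 ++ c2)) x ->
     exists R : recipe,
       is_recipe R /\ no_destructor R /\
       rvars_in (in_dom (funion (phiLL G) (phi_l (c1' ++ c2')))) R /\
       phi_l (c1 ++ c2) x = apply_frame (funion (phiLL G) (phi_l (c1' ++ c2'))) R /\
       phi_r (c1 ++ c2) x = apply_frame (funion (phiLL G) (phi_r (c1' ++ c2'))) R).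
Proof.
  intros _ H1 H2 _ _ Hs.
  destruct (main G _ _ Hs) as [P1' P2']; unfold cat in *; simpl in *.
  assert (Hc : forall p, In p (c1 ++ c2) -> is_constraint p).
  { intros p Hp; apply in_app_iff in Hp; destruct Hp; auto. }
  destruct (vals_msg G _ Hc) as [V1 V2].
  split; intros [w | u v] Hx; try (exfalso; apply Hx; reflexivity).
  - destruct (P1' (RC u v) Hx) as [R [A [B [C D]]]].
    exists R; rewrite (ef_ev _ _ V1), (ef_ev _ _ V2); repeat split; auto.
  - destruct (P2' (RC u v) Hx) as [R [A [B [C [D E]]]]].
    exists R; repeat split; auto.
Qed.
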